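(* Let $p,q\in\mathbb{N}$ with $q\ne0$, and suppose $x=p/q-1\in(-1,1)$ is regular for the sequence $n_j$ and $\lim_{j\to\infty}D_{n_j}(x)/n_j=L\in\overline{\mathbb{R}}$. Then $L$ is finite and $|L|=A(m^2/q^2)$ for some integer $m$ with $0\le m<q$. Moreover, there exists $j_0$ such that for all $j\ge j_0$, $(-1)^{\iota_{n_j}(x)}=\operatorname{sign}(L)$ and $|\rho_{n_j}(x)|=m/q$.
   Context: Nodes: $x_{k,n}:=2k/n-1$, $k=0,\dots,n$; $D_n(x)=\sum_{k=0}^n(-1)^k\frac{1}{x-x_{k,n}}$. $\iota_n(x):=\lfloor n(x+1)/2\rfloor$, $\rho_n(x):=n(x-x_{\iota_n(x),n})-1$. $A(y)=\sum_{k=0}^\infty(-1)^k\frac{4k+2}{(2k+1)^2-y}$ for $y\in[0,1)$. $\overline{\mathbb{R}}=\mathbb{R}\cup\{\pm\infty\}$ is the two-point compactification of $\mathbb{R}$. A sequence $n_j$ is a strictly increasing map $\mathbb{N}\to\mathbb{N}$; $x$ is regular for $n_j$ if there is $j_0$ with $x\notin\{x_{0,n_j},\dots,x_{n_j,n_j}\}$ for all $j\ge j_0$. *)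

(* Defs.v *)
From Stdlib Require Import Reals ZArith.
From Coquelicot Require Import Coquelicot.
Open Scope R_scope.

Definition node (k : Z) (n : nat) : R := 2 * IZR k / INR n - 1.

Definition Dn (n : nat) (x : R) : R :=
  sum_f_R0 (fun k => (-1) ^ k / (x - node (Z.of_nat k) n)) n.

Definition iota_n (n : nat) (x : R) : Z := Int_part (INR n * (x + 1) / 2).

Definition rho_n (n : nat) (x : R) : R := INR n * (x - node (iota_n n x) n) - 1.

(* A(y) = sum_{k>=0} (-1)^k (4k+2)/((2k+1)^2 - y)  (convergent for y in [0,1)) *)
Definition A_ser (y : R) : R :=
  Series (fun k : nat => (-1) ^ k * (4 * INR k + 2) / ((2 * INR k + 1) ^ 2 - y)).

Definition sgn (r : R) : R := if Rlt_dec 0 r then 1 else if Rlt_dec r 0 then -1 else 0.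

Definition strictly_increasing (n : nat -> nat) : Prop :=
  forall i j : nat, (i < j)%nat -> (n i < n j)%nat.

Definition regular (n : nat -> nat) (x : R) : Prop :=
  exists j0 : nat, forall j : nat, (j0 <= j)%nat ->
    forall k : nat, (k <= n j)%nat -> x <> node (Z.of_nat k) (n j).

(* Main.v *)
Require Import Defs.
From Stdlib Require Import Reals Lra Lia ZArith.
From Coquelicot Require Import Coquelicot.
Open Scope R_scope.

Lemma alt_ser (u : nat -> R) : Un_decreasing u -> Un_cv u 0 ->
  exists l, is_series (tg_alt u) l /\
   (forall N, Rabs (l - sum_f_R0 (tg_alt u) N) <= u (S N)) /\
   sum_f_R0 (tg_alt u) 1 <= l <= sum_f_R0 (tg_alt u) 0.
Proof.
intros Hd Hc.
destruct (alternated_series u Hd Hc) as [l Hl].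
exists l. split; [|split].
- apply is_series_Reals; exact Hl.
- intros N. destruct (Nat.Even_or_Odd N) as [[M HM]|[M HM]]; subst N.
  + destruct (alternated_series_ineq u l M Hd Hc Hl) as [H1 H2].
    rewrite tech5 in H1. unfold tg_alt at 2 in H1.
    rewrite pow_1_odd in H1.
    apply Rabs_le; lra.
  + destruct (alternated_series_ineq u l M Hd Hc Hl) as [H1 _].
    destruct (alternated_series_ineq u l (S M) Hd Hc Hl) as [_ H2].
    replace (2 * S M)%nat with (S (2 * M + 1)) in H2 by lia.
    rewrite tech5 in H2. unfold tg_alt at 2 in H2.
    replace (S (2*M+1)) with (2 * (S M))%nat in H2 by lia.
    rewrite pow_1_even in H2.
    replace (2*M+1)%nat with (S (2*M)) in * by lia.
    replace (2 * S M)%nat with (S (S (2*M))) in H2 by lia.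
    apply Rabs_le; lra.
- destruct (alternated_series_ineq u l 0 Hd Hc Hl) as [H1 H2].
  change (S (2*0)) with 1%nat in H1; change (2*0)%nat with 0%nat in H2. split; lra.
Qed.

Lemma cv0_bound (w : nat -> R) (C : R) : 0 <= C ->
  (forall k, (1 <= k)%nat -> Rabs (w k) <= C / INR k) -> Un_cv w 0.
Proof.
intros HC Hw eps Heps.
destruct (archimed (C / eps)) as [H1 _].
assert (HCe : 0 <= C / eps) by (apply Rdiv_le_0_compat; lra).
exists (S (Z.to_nat (up (C/eps)))). intros k Hk.
unfold R_dist. rewrite Rminus_0_r.
assert (Hk1 : (1 <= k)%nat) by lia.
assert (HkR : IZR (up (C/eps)) < INR k).
{ assert (0 <= up (C/eps))%Z.
  { apply le_IZR. lra. }
  rewrite <- (Z2Nat.id (up (C/eps))) by lia.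
  rewrite <- INR_IZR_INZ. apply lt_INR. lia. }
assert (Hkpos : 0 < INR k) by lra.
eapply Rle_lt_trans. apply Hw; exact Hk1.
destruct (Req_dec C 0) as [->|HC0].
{ unfold Rdiv. rewrite !Rmult_0_l. lra. }
assert (0 < C / eps) by (apply Rdiv_lt_0_compat; lra).
apply Rlt_le_trans with (C / (C/eps)).
- unfold Rdiv. apply Rmult_lt_compat_l; [lra|].
  apply Rinv_lt_contravar; [apply Rmult_lt_0_compat|]; lra.
- right. field. split; lra.
Qed.

Definition up_ (s : R) (k : nat) : R := / (2 * INR k + 1 + s).

Lemma up_pos s k : -1 < s -> 0 < up_ s k.
Proof. intros; unfold up_. apply Rinv_0_lt_compat. pose proof (pos_INR k). lra. Qed.

Lemma up_dec s : -1 < s -> Un_decreasing (up_ s).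
Proof.
intros Hs k. unfold up_. apply Rinv_le_contravar.
- pose proof (pos_INR k). lra.
- rewrite S_INR. lra.
Qed.

Lemma up_cv s : -1 < s -> Un_cv (up_ s) 0.
Proof.
intros Hs. apply cv0_bound with 1; [lra|].
intros k Hk. rewrite Rabs_pos_eq by (left; apply up_pos; auto).
unfold up_. assert (1 <= INR k) by (apply (le_INR 1); auto).
unfold Rdiv. rewrite Rmult_1_l. apply Rinv_le_contravar; lra.
Qed.

Definition Sp (s : R) : R := Series (tg_alt (up_ s)).

Lemma Sp_prop s : -1 < s ->
  is_series (tg_alt (up_ s)) (Sp s) /\
  (forall N, Rabs (Sp s - sum_f_R0 (tg_alt (up_ s)) N) <= up_ s (S N)) /\
  0 < Sp s <= / (1 + s).
Proof.
intros Hs.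
destruct (alt_ser (up_ s) (up_dec s Hs) (up_cv s Hs)) as [l [H1 [H2 H3]]].
assert (E : Sp s = l) by (apply is_series_unique; auto).
rewrite E. split; [auto|split;[auto|]].
simpl in H3. unfold tg_alt, up_ in H3. simpl in H3.
replace (2 * 0 + 1 + s) with (1 + s) in H3 by lra.
replace (2 * 1 + 1 + s) with (3 + s) in H3 by lra.
assert (/ (3 + s) < / (1 + s)) by (apply Rinv_lt_contravar; nra).
split; lra.
Qed.

Definition Aterm (y : R) (k : nat) : R :=
  (-1) ^ k * (4 * INR k + 2) / ((2 * INR k + 1) ^ 2 - y).

Lemma A_decomp s : -1 < s < 1 ->
  is_series (Aterm (s ^ 2)) (Sp s + Sp (- s)).
Proof.
intros Hs.
destruct (Sp_prop s) as [H1 _]; [lra|].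
destruct (Sp_prop (-s)) as [H2 _]; [lra|].
pose proof (is_series_plus _ _ _ _ H1 H2) as H.
eapply is_series_ext; [|exact H].
intros k. unfold Aterm, tg_alt, up_. change plus with Rplus. simpl.
pose proof (pos_INR k).
field. repeat split; nra.
Qed.

Lemma div_le_cross a b c d : 0 < b -> 0 < d -> a * d <= c * b -> a / b <= c / d.
Proof.
intros Hb Hd H. unfold Rdiv.
apply Rmult_le_reg_r with (b * d). apply Rmult_lt_0_compat; auto.
replace (a * / b * (b * d)) with (a * d) by (field; lra).
replace (c * / d * (b * d)) with (c * b) by (field; lra).
auto.
Qed.

Definition hh (y1 y2 : R) (k : nat) : R :=
  (4 * INR k + 2) / (((2 * INR k + 1) ^ 2 - y2) * ((2 * INR k + 1) ^ 2 - y1)).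

Lemma hh_key c y1 y2 : 1 <= c -> 0 <= y1 < 1 -> 0 <= y2 < 1 ->
  2 * (c + 2) / (((c + 2) ^ 2 - y2) * ((c + 2) ^ 2 - y1)) <=
  2 * c / ((c ^ 2 - y2) * (c ^ 2 - y1)).
Proof.
intros Hc H1 H2.
assert (E1 : 0 < c ^ 2 - y1) by nra.
assert (E2 : 0 < c ^ 2 - y2) by nra.
assert (F1 : c ^ 2 - y1 <= (c+2) ^ 2 - y1) by nra.
assert (F2 : (c + 2) * (c ^ 2 - y2) <= c * ((c+2) ^ 2 - y2)) by nra.
apply div_le_cross; try (apply Rmult_lt_0_compat; nra).
assert (G : (c + 2) * (c ^ 2 - y2) * (c ^ 2 - y1) <= c * ((c+2) ^ 2 - y2) * ((c+2) ^ 2 - y1)).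
{ apply Rle_trans with (c * ((c+2) ^ 2 - y2) * (c ^ 2 - y1)).
  - apply Rmult_le_compat_r; lra.
  - apply Rmult_le_compat_l; [nra|lra]. }
nra.
Qed.

Lemma hh_dec y1 y2 : 0 <= y1 < 1 -> 0 <= y2 < 1 -> Un_decreasing (hh y1 y2).
Proof.
intros H1 H2 k. unfold hh. rewrite S_INR.
pose proof (pos_INR k).
replace (4 * (INR k + 1) + 2) with (2 * ((2 * INR k + 1) + 2)) by ring.
replace (2 * (INR k + 1) + 1) with ((2 * INR k + 1) + 2) by ring.
replace (4 * INR k + 2) with (2 * (2 * INR k + 1)) by ring.
apply hh_key; lra.
Qed.

Lemma hh_cv y1 y2 : 0 <= y1 < 1 -> 0 <= y2 < 1 -> Un_cv (hh y1 y2) 0.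
Proof.
intros H1 H2. apply cv0_bound with 1; [lra|].
intros k Hk. assert (1 <= INR k) by (apply (le_INR 1); auto).
unfold hh.
assert (E1 : 4 * INR k * (INR k + 1) <= (2 * INR k + 1) ^ 2 - y1) by nra.
assert (E2 : 4 * INR k * (INR k + 1) <= (2 * INR k + 1) ^ 2 - y2) by nra.
rewrite Rabs_pos_eq.
- apply div_le_cross; [apply Rmult_lt_0_compat; nra|lra|].
  assert (16 * (INR k * (INR k + 1)) ^ 2 <= ((2 * INR k + 1) ^ 2 - y2) * ((2 * INR k + 1) ^ 2 - y1)).
  { replace (16 * (INR k * (INR k + 1)) ^ 2) with ((4 * INR k * (INR k + 1)) * (4 * INR k * (INR k + 1))) by ring.
    apply Rmult_le_compat; nra. }
  nra.
- apply Rdiv_le_0_compat; [lra|apply Rmult_lt_0_compat; nra].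
Qed.

Lemma A_strict s1 s2 : 0 <= s1 -> s1 < s2 -> s2 < 1 ->
  Sp s1 + Sp (- s1) < Sp s2 + Sp (- s2).
Proof.
intros H0 H12 H2.
set (y1 := s1 ^ 2). set (y2 := s2 ^ 2).
assert (Y1 : 0 <= y1 < 1) by (unfold y1; split; nra).
assert (Y2 : 0 <= y2 < 1) by (unfold y2; split; nra).
assert (Y12 : y1 < y2) by (unfold y1, y2; nra).
pose proof (A_decomp s1 ltac:(lra)) as A1.
pose proof (A_decomp s2 ltac:(lra)) as A2.
fold y1 in A1. fold y2 in A2.
destruct (alt_ser (hh y1 y2) (hh_dec y1 y2 Y1 Y2) (hh_cv y1 y2 Y1 Y2)) as [l [Hl [_ Hb]]].
pose proof (is_series_minus _ _ _ _ A2 A1) as D.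
pose proof (is_series_scal (y2 - y1) _ _ Hl) as D2.
assert (E : (Sp s2 + Sp (- s2)) - (Sp s1 + Sp (- s1)) = (y2 - y1) * l).
{ assert (D3 : is_series (fun n => plus (Aterm y2 n) (opp (Aterm y1 n))) (scal (y2 - y1) l)).
  2:{ pose proof (is_series_unique _ _ D) as U1. pose proof (is_series_unique _ _ D3) as U3.
      assert (G : Sp s2 + Sp (- s2) + - (Sp s1 + Sp (- s1)) = (y2 - y1) * l).
      { etransitivity; [symmetry; exact U1|exact U3]. }
      lra. }
  eapply is_series_ext; [|exact D2].
  intros k. change plus with Rplus. change opp with Ropp. change scal with Rmult.
  unfold Aterm, tg_alt, hh. pose proof (pos_INR k).
  assert (0 < (2 * INR k + 1) ^ 2 - y1) by nra.
  assert (0 < (2 * INR k + 1) ^ 2 - y2) by nra.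
  match goal with |- ?a = ?b => change (@eq R a b) end. field. split; lra. }
assert (Hl0 : 0 < l).
{ destruct Hb as [Hb _]. simpl in Hb. unfold tg_alt, hh in Hb. simpl in Hb.
  assert (Z0 : 2 <= (4 * 0 + 2) / ((((2 * 0 + 1) * ((2 * 0 + 1) * 1)) - y2) * (((2 * 0 + 1) * ((2 * 0 + 1) * 1)) - y1))).
  { replace (4*0+2) with 2 by ring. replace ((2*0+1)*((2 * 0 + 1) * 1)) with 1 by ring.
    apply Rle_trans with (2 / 1); [lra|].
    apply div_le_cross; [lra|apply Rmult_lt_0_compat; lra|nra]. }
  assert (Z1 : (4 * 1 + 2) / ((((2 * 1 + 1) * ((2 * 1 + 1) * 1)) - y2) * (((2 * 1 + 1) * ((2 * 1 + 1) * 1)) - y1)) <= 1).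
  { apply Rle_trans with (1 / 1); [|lra].
    apply div_le_cross; [apply Rmult_lt_0_compat; lra|lra|nra]. }
  lra. }
nra.
Qed.

Lemma A_inj (q m1 m2 : nat) : (m1 < q)%nat -> (m2 < q)%nat ->
  Sp (INR m1 / INR q) + Sp (- (INR m1 / INR q)) =
  Sp (INR m2 / INR q) + Sp (- (INR m2 / INR q)) -> m1 = m2.
Proof.
intros H1 H2 E.
assert (Hq : 0 < INR q) by (apply lt_0_INR; lia).
assert (B : forall m, (m < q)%nat -> 0 <= INR m / INR q < 1).
{ intros m Hm. split. apply Rdiv_le_0_compat; [apply pos_INR|lra].
  apply lt_INR in Hm. apply Rmult_lt_reg_r with (INR q); auto.
  unfold Rdiv. rewrite Rmult_assoc, Rinv_l by lra. lra. }
destruct (lt_eq_lt_dec m1 m2) as [[L|L]|L]; auto.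
- exfalso. assert (INR m1 / INR q < INR m2 / INR q).
  { apply lt_INR in L. unfold Rdiv. apply Rmult_lt_compat_r; auto. apply Rinv_0_lt_compat; auto. }
  pose proof (A_strict _ _ (proj1 (B m1 H1)) H (proj2 (B m2 H2))). lra.
- exfalso. assert (INR m2 / INR q < INR m1 / INR q).
  { apply lt_INR in L. unfold Rdiv. apply Rmult_lt_compat_r; auto. apply Rinv_0_lt_compat; auto. }
  pose proof (A_strict _ _ (proj1 (B m2 H2)) H (proj2 (B m1 H1))). lra.
Qed.

Lemma sum_rev (g : nat -> R) (N : nat) :
  sum_f_R0 (fun i => g (N - i)%nat) N = sum_f_R0 g N.
Proof.
revert g. induction N as [|N IH]; intros g.
- reflexivity.
- rewrite decomp_sum by lia. simpl pred.
  rewrite tech5. rewrite Nat.sub_0_r.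
  rewrite (sum_eq _ (fun i => g (N - i)%nat)) by (intros; reflexivity).
  rewrite IH. ring.
Qed.

Lemma pow_m1_sub a i : (i <= a)%nat -> (-1) ^ (a - i) = (-1) ^ a * (-1) ^ i.
Proof.
intros H.
assert (E : (-1) ^ i * (-1) ^ i = 1).
{ rewrite <- pow_add. replace (i + i)%nat with (2 * i)%nat by lia. apply pow_1_even. }
replace a with ((a - i) + i)%nat at 2 by lia.
rewrite pow_add, Rmult_assoc, E. ring.
Qed.

Lemma Dn_split (n a : nat) (x s : R) : (a < n)%nat ->
  INR n * (x + 1) - 2 * INR a - 1 = s -> -1 < s < 1 ->
  Dn n x / INR n = (-1) ^ a * (sum_f_R0 (tg_alt (up_ s)) a +
                               sum_f_R0 (tg_alt (up_ (- s))) (n - S a)).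
Proof.
intros Han Hs Hs1.
assert (Hn : 0 < INR n) by (apply lt_0_INR; lia).
assert (Hx : x = (s + 2 * INR a + 1) / INR n - 1) by (rewrite <- Hs; field; lra).
unfold Dn. rewrite (tech2 _ a n Han).
rewrite <- (sum_rev _ a). cbv beta.
set (c := (-1) ^ a).
assert (E1 : sum_f_R0 (fun i => (-1) ^ (a - i) / (x - node (Z.of_nat (a - i)) n)) a =
   INR n * sum_f_R0 (fun i => tg_alt (up_ s) i * c) a).
{ rewrite scal_sum. apply sum_eq. intros i Hi. unfold tg_alt, up_, node.
  rewrite <- INR_IZR_INZ, minus_INR by lia. rewrite pow_m1_sub by lia.
  pose proof (pos_INR i).
  assert (D : x - (2 * (INR a - INR i) / INR n - 1) = (2 * INR i + 1 + s) / INR n)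
    by (rewrite Hx; field; lra).
  rewrite D. unfold c. field. split; lra. }
assert (E2 : sum_f_R0 (fun i => (-1) ^ (S a + i) / (x - node (Z.of_nat (S a + i)) n)) (n - S a) =
   INR n * sum_f_R0 (fun i => tg_alt (up_ (- s)) i * c) (n - S a)).
{ rewrite scal_sum. apply sum_eq. intros i Hi. unfold tg_alt, up_, node.
  rewrite <- INR_IZR_INZ, plus_INR, S_INR. rewrite pow_add. simpl pow.
  pose proof (pos_INR i).
  assert (D : x - (2 * (INR a + 1 + INR i) / INR n - 1) = - (2 * INR i + 1 + - s) / INR n)
    by (rewrite Hx; field; lra).
  rewrite D. unfold c. field. split; lra. }
rewrite E1, E2, <- (scal_sum (tg_alt (up_ s)) a c), <- (scal_sum (tg_alt (up_ (- s))) (n - S a) c). field. lra.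
Qed.

Lemma final (q : nat) (AA : nat -> R) (B : R) (u sg e : nat -> R) (mm : nat -> nat) (L : Rbar) :
 (forall m1 m2, (m1<q)%nat -> (m2<q)%nat -> AA m1 = AA m2 -> m1 = m2) ->
 (forall m, (m<q)%nat -> 0 < AA m <= B) ->
 Un_cv e 0 ->
 (exists j0, forall j, (j0 <= j)%nat -> (sg j = 1 \/ sg j = -1) /\ (mm j < q)%nat /\
      Rabs (u j - sg j * AA (mm j)) <= e j) ->
 is_lim_seq u L ->
 exists l, L = Finite l /\ exists m, (m<q)%nat /\ Rabs l = AA m /\
   exists j0, forall j, (j0 <= j)%nat -> sg j = sgn l /\ mm j = m.
Proof.
intros Hinj HA Hcv [j0 Hj] Hlim.
apply is_lim_seq_spec in Hlim.
assert (Hsg : forall j, (j0 <= j)%nat -> Rabs (sg j) = 1).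
{ intros j Hj'. destruct (Hj j Hj') as [[-> | ->] _]; rewrite ?Rabs_R1, ?Rabs_m1; auto. }
destruct L as [l| |].
2:{ exfalso. destruct (Hlim (B+1)) as [N1 HN1].
    destruct (Hcv 1 ltac:(lra)) as [N2 HN2].
    set (j := (j0 + N1 + N2)%nat).
    specialize (HN1 j ltac:(unfold j; lia)). specialize (HN2 j ltac:(unfold j; lia)).
    destruct (Hj j ltac:(unfold j; lia)) as [Hs [Hm Hb]].
    pose proof (HA _ Hm). pose proof (Hsg j ltac:(unfold j; lia)).
    unfold R_dist in HN2. rewrite Rminus_0_r in HN2.
    apply Rabs_le_between in Hb. apply Rabs_lt_between in HN2.
    destruct Hs as [Hs|Hs]; rewrite Hs in Hb; lra. }
2:{ exfalso. destruct (Hlim (-(B+1))) as [N1 HN1].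
    destruct (Hcv 1 ltac:(lra)) as [N2 HN2].
    set (j := (j0 + N1 + N2)%nat).
    specialize (HN1 j ltac:(unfold j; lia)). specialize (HN2 j ltac:(unfold j; lia)).
    destruct (Hj j ltac:(unfold j; lia)) as [Hs [Hm Hb]].
    pose proof (HA _ Hm).
    unfold R_dist in HN2. rewrite Rminus_0_r in HN2.
    apply Rabs_le_between in Hb. apply Rabs_lt_between in HN2.
    destruct Hs as [Hs|Hs]; rewrite Hs in Hb; lra. }
exists l. split; [reflexivity|].
assert (V : forall eps, 0 < eps -> exists N, forall j, (N <= j)%nat ->
   Rabs (u j - l) < eps /\ Rabs (u j - sg j * AA (mm j)) < eps).
{ intros eps Heps. destruct (Hlim (mkposreal eps Heps)) as [N1 HN1].
  destruct (Hcv eps Heps) as [N2 HN2].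
  exists (j0 + N1 + N2)%nat. intros j Hjj. split.
  - apply (HN1 j). lia.
  - specialize (HN2 j ltac:(lia)). unfold R_dist in HN2. rewrite Rminus_0_r in HN2.
    destruct (Hj j ltac:(lia)) as [_ [_ Hb]].
    pose proof (Rle_abs (e j)). lra. }
assert (W : forall eps, 0 < eps -> exists N, forall j, (N <= j)%nat ->
   Rabs (AA (mm j) - Rabs l) < eps).
{ intros eps Heps. destruct (V (eps/2) ltac:(lra)) as [N HN].
  exists (j0 + N)%nat. intros j Hjj. destruct (HN j ltac:(lia)) as [H1 H2].
  pose proof (Rabs_triang_inv2 (u j) l).
  pose proof (Rabs_triang_inv2 (u j) (sg j * AA (mm j))).
  rewrite Rabs_mult, (Hsg j ltac:(lia)), Rmult_1_l in H0.
  destruct (Hj j ltac:(lia)) as [_ [Hm _]].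
  rewrite (Rabs_pos_eq (AA (mm j))) in H0 by (left; apply HA; auto).
  apply Rabs_lt_between. apply Rabs_le_between in H. apply Rabs_le_between in H0. lra. }
assert (P : forall M, (M <= q)%nat -> exists N, forall j, (N <= j)%nat ->
   forall m, (m < M)%nat -> AA m <> Rabs l -> mm j <> m).
{ induction M as [|M IH]; intros HM.
  - exists 0%nat. intros; lia.
  - destruct (IH ltac:(lia)) as [N1 HN1].
    destruct (Req_dec (AA M) (Rabs l)) as [E|E].
    + exists N1. intros j Hjj m Hm Hne.
      destruct (Nat.eq_dec m M) as [->|Hne2]; [contradiction|].
      apply HN1; auto; lia.
    + assert (Hp : 0 < Rabs (AA M - Rabs l)) by (apply Rabs_pos_lt; lra).
      destruct (W _ Hp) as [N2 HN2].
      exists (N1 + N2)%nat. intros j Hjj m Hm Hne.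
      destruct (Nat.eq_dec m M) as [->|Hne2].
      * intros Heq. specialize (HN2 j ltac:(lia)). rewrite Heq in HN2. lra.
      * apply HN1; auto; lia. }
destruct (P q (le_n q)) as [N1 HN1].
set (J := (j0 + N1)%nat).
assert (HAl : forall j, (J <= j)%nat -> AA (mm j) = Rabs l).
{ intros j Hjj. destruct (Req_dec (AA (mm j)) (Rabs l)) as [E|E]; auto.
  destruct (Hj j ltac:(unfold J in *; lia)) as [_ [Hm _]].
  exfalso. apply (HN1 j ltac:(unfold J in *; lia) (mm j) Hm E). reflexivity. }
exists (mm J).
destruct (Hj J ltac:(unfold J; lia)) as [_ [HmJ _]].
split; [auto|]. split; [symmetry; apply HAl; lia|].
assert (Hl0 : 0 < Rabs l) by (rewrite <- (HAl J (le_n J)); apply HA; auto).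
destruct (V (Rabs l / 2) ltac:(lra)) as [N2 HN2].
exists (J + N2)%nat. intros j Hjj.
destruct (Hj j ltac:(unfold J in *; lia)) as [Hs [Hm _]].
split.
- destruct (HN2 j ltac:(lia)) as [H1 H2].
  rewrite (HAl j ltac:(lia)) in H2.
  unfold sgn. apply Rabs_lt_between in H1. apply Rabs_lt_between in H2.
  destruct (Rlt_dec 0 l) as [Lp|Lp].
  + rewrite Rabs_pos_eq in * by lra. destruct Hs as [Hs|Hs]; rewrite Hs in *; lra.
  + destruct (Rlt_dec l 0) as [Ln|Ln].
    * rewrite Rabs_left in * by lra. destruct Hs as [Hs|Hs]; rewrite Hs in *; lra.
    * exfalso. assert (l = 0) by lra. subst. rewrite Rabs_R0 in Hl0. lra.
- apply Hinj; auto. rewrite (HAl j ltac:(lia)). symmetry. apply HAl; lia.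
Qed.

Lemma per_j (p q N : nat) (x : R) : (0 < q)%nat -> x = INR p / INR q - 1 -> -1 < x < 1 ->
  (0 < N)%nat -> (forall k, (k <= N)%nat -> x <> node (Z.of_nat k) N) ->
  let a := Z.to_nat (iota_n N x) in
  let mmv := Z.abs_nat (Z.of_nat (N * p) - 2 * Z.of_nat a * Z.of_nat q - Z.of_nat q) in
  (powerRZ (-1) (iota_n N x) = 1 \/ powerRZ (-1) (iota_n N x) = -1) /\ (mmv < q)%nat /\
  Rabs (Dn N x / INR N - powerRZ (-1) (iota_n N x) *
        (Sp (INR mmv / INR q) + Sp (- (INR mmv / INR q)))) <=
     (INR q / INR p + INR q / (2 * INR q - INR p)) / INR N /\
  Rabs (rho_n N x) = INR mmv / INR q.
Proof.
intros Hq Hx HxI HN Hreg a mmv.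
assert (Hq' : 0 < INR q) by (apply lt_0_INR; lia).
assert (HN' : 0 < INR N) by (apply lt_0_INR; lia).
assert (Hp : 0 < INR p < 2 * INR q).
{ assert (0 < INR p / INR q < 2) by lra.
  split.
  - apply Rmult_lt_reg_r with (/ INR q). apply Rinv_0_lt_compat; lra. lra.
  - apply Rmult_lt_reg_r with (/ INR q). apply Rinv_0_lt_compat; lra.
    replace (2 * INR q * / INR q) with 2 by (field; lra). lra. }
set (t := INR N * (x + 1) / 2).
assert (Ht : t = INR N * INR p / (2 * INR q)) by (unfold t; rewrite Hx; field; lra).
assert (Ht0 : 0 < t < INR N) by (unfold t; split; nra).
unfold iota_n in *. fold t in a |- *.
destruct (base_Int_part t) as [B1 B2].
assert (Hi0 : (0 <= Int_part t)%Z).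
{ assert (-1 < IZR (Int_part t)) by lra.
  apply lt_IZR in H. lia. }
assert (Ha : IZR (Int_part t) = INR a) by (unfold a; rewrite INR_IZR_INZ, Z2Nat.id; auto).
assert (HaN : (a < N)%nat) by (apply INR_lt; lra).
assert (Hta : INR a < t).
{ destruct (Rle_lt_or_eq_dec (INR a) t ltac:(lra)) as [H|H]; [exact H|].
  exfalso. apply (Hreg a ltac:(lia)). unfold node. rewrite <- INR_IZR_INZ, H.
  unfold t. field. lra. }
set (s := rho_n N x).
assert (Hs : INR N * (x + 1) - 2 * INR a - 1 = s).
{ unfold s, rho_n, iota_n, node. fold t. rewrite Ha. field. lra. }
assert (Hs1 : -1 < s < 1) by (rewrite <- Hs; unfold t in *; lra).
assert (Hpow : powerRZ (-1) (Int_part t) = (-1) ^ a).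
{ rewrite pow_powerRZ. unfold a. rewrite Z2Nat.id; auto. }
rewrite Hpow.
assert (Habs : Rabs s = INR mmv / INR q).
{ unfold mmv. rewrite INR_IZR_INZ, Nat2Z.inj_abs_nat, abs_IZR.
  rewrite !minus_IZR, !mult_IZR, <- !INR_IZR_INZ, mult_INR.
  replace (INR N * INR p - 2 * INR a * INR q - INR q) with (INR q * s).
  - rewrite Rabs_mult, (Rabs_pos_eq (INR q)) by lra. field. lra.
  - rewrite <- Hs. rewrite Hx. field. lra. }
assert (Hmm : (mmv < q)%nat).
{ apply INR_lt. assert (INR mmv / INR q < 1) by (rewrite <- Habs; apply Rabs_def1; lra).
  apply Rmult_lt_reg_r with (/ INR q). apply Rinv_0_lt_compat; lra.
  rewrite Rinv_r by lra. exact H. }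
assert (HAA : Sp (INR mmv / INR q) + Sp (- (INR mmv / INR q)) = Sp s + Sp (- s)).
{ rewrite <- Habs. destruct (Rcase_abs s) as [Hn|Hn].
  - rewrite Rabs_left by auto. rewrite Ropp_involutive. ring.
  - rewrite Rabs_pos_eq by lra. reflexivity. }
rewrite HAA.
split; [|split; [auto|split; [|fold s; auto]]].
{ destruct (Nat.Even_or_Odd a) as [[k ->]|[k ->]].
  - left. apply pow_1_even.
  - right. rewrite Nat.add_1_r. apply pow_1_odd. }
rewrite (Dn_split N a x s HaN Hs Hs1).
destruct (Sp_prop s ltac:(lra)) as [_ [T1 _]].
destruct (Sp_prop (- s) ltac:(lra)) as [_ [T2 _]].
specialize (T1 a). specialize (T2 (N - S a)%nat).
rewrite <- Rmult_minus_distr_l, Rabs_mult, pow_1_abs, Rmult_1_l.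
set (L1 := sum_f_R0 (tg_alt (up_ s)) a) in *.
set (L2 := sum_f_R0 (tg_alt (up_ (- s))) (N - S a)) in *.
replace (L1 + L2 - (Sp s + Sp (- s))) with (- ((Sp s - L1) + (Sp (- s) - L2))) by ring.
rewrite Rabs_Ropp.
eapply Rle_trans; [apply Rabs_triang|].
replace ((INR q / INR p + INR q / (2 * INR q - INR p)) / INR N) with (INR q / INR p * / INR N + INR q / (2 * INR q - INR p) * / INR N) by (field; lra).
apply Rplus_le_compat.
- eapply Rle_trans; [exact T1|]. unfold up_. rewrite S_INR.
  replace (INR q / INR p * / INR N) with (/ (INR N * INR p / INR q)) by (field; lra).
  apply Rinv_le_contravar.
  + apply Rdiv_lt_0_compat; nra.
  + replace (INR N * INR p / INR q) with (2 * t) by (rewrite Ht; field; lra). lra.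
- eapply Rle_trans; [exact T2|]. unfold up_.
  replace (INR (S (N - S a))) with (INR N - INR a) by (rewrite <- minus_INR by lia; f_equal; lia).
  replace (INR q / (2 * INR q - INR p) * / INR N) with (/ (INR N * (2 * INR q - INR p) / INR q)) by (field; lra).
  apply Rinv_le_contravar.
  + apply Rdiv_lt_0_compat; nra.
  + replace (INR N * (2 * INR q - INR p) / INR q) with (2 * (INR N - t)) by (rewrite Ht; field; lra). lra.
Qed.

Lemma sinc_ge (n : nat -> nat) : strictly_increasing n -> forall j, (j <= n j)%nat.
Proof.
intros H j. induction j as [|j IH]; [lia|].
pose proof (H j (S j) ltac:(lia)). lia.
Qed.

Theorem lemma8 (p q : nat) (n : nat -> nat) (x : R) (L : Rbar)
  (hq : q <> 0%nat)
  (hx : x = INR p / INR q - 1)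
  (hxI : -1 < x < 1)
  (hn : strictly_increasing n)
  (hreg : regular n x)
  (hlim : is_lim_seq (fun j => Dn (n j) x / INR (n j)) L) :
  exists l : R, L = Finite l /\
    exists m : nat, (m < q)%nat /\
      Rabs l = A_ser (INR m ^ 2 / INR q ^ 2) /\
      exists j0 : nat, forall j : nat, (j0 <= j)%nat ->
        powerRZ (-1) (iota_n (n j) x) = sgn l /\
        Rabs (rho_n (n j) x) = INR m / INR q.
Proof.
assert (Hq : (0 < q)%nat) by lia.
assert (Hq' : 0 < INR q) by (apply lt_0_INR; lia).
assert (Hp : 0 < INR p < 2 * INR q).
{ assert (0 < INR p / INR q < 2) by lra.
  split.
  - apply Rmult_lt_reg_r with (/ INR q). apply Rinv_0_lt_compat; lra. lra.
  - apply Rmult_lt_reg_r with (/ INR q). apply Rinv_0_lt_compat; lra.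
    replace (2 * INR q * / INR q) with 2 by (field; lra). lra. }
destruct hreg as [jr Hr].
pose proof (sinc_ge n hn) as Hnj.
set (K := INR q / INR p + INR q / (2 * INR q - INR p)).
assert (HK : 0 <= K).
{ unfold K. apply Rplus_le_le_0_compat; left; apply Rdiv_lt_0_compat; lra. }
set (AA := fun m : nat => Sp (INR m / INR q) + Sp (- (INR m / INR q))).
set (mm := fun j => Z.abs_nat (Z.of_nat (n j * p) - 2 * Z.of_nat (Z.to_nat (iota_n (n j) x)) * Z.of_nat q - Z.of_nat q)).
assert (Hr01 : forall m, (m < q)%nat -> 0 <= INR m / INR q < 1).
{ intros m Hm. split. apply Rdiv_le_0_compat; [apply pos_INR|lra].
  apply lt_INR in Hm. apply Rmult_lt_reg_r with (INR q); auto.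
  unfold Rdiv. rewrite Rmult_assoc, Rinv_l by lra. lra. }
destruct (final q AA (1 + INR q) (fun j => Dn (n j) x / INR (n j))
   (fun j => powerRZ (-1) (iota_n (n j) x)) (fun j => K / INR j) mm L)
  as [l [HL [m [Hm [Hlm [j0 Hj0]]]]]].
- intros m1 m2 H1 H2 E. exact (A_inj q m1 m2 H1 H2 E).
- intros m Hm. unfold AA. set (r := INR m / INR q).
  destruct (Hr01 m Hm) as [R1 R2]. fold r in R1, R2.
  destruct (Sp_prop r ltac:(lra)) as [_ [_ [S1 S2]]].
  destruct (Sp_prop (- r) ltac:(lra)) as [_ [_ [S3 S4]]].
  split; [lra|].
  assert (/ (1 + r) <= 1).
  { rewrite <- Rinv_1. apply Rinv_le_contravar; lra. }
  assert (/ (1 + - r) <= INR q).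
  { assert (INR m + 1 <= INR q) by (rewrite <- S_INR; apply le_INR; lia).
    assert (1 / INR q <= 1 + - r).
    { unfold r. replace (1 + - (INR m / INR q)) with ((INR q - INR m) / INR q) by (field; lra).
      apply div_le_cross; [lra|lra|nra]. }
    apply Rle_trans with (/ (1 / INR q)).
    - apply Rinv_le_contravar; [apply Rdiv_lt_0_compat; lra|lra].
    - right; field; lra. }
  lra.
- apply cv0_bound with K; auto. intros k Hk.
  rewrite Rabs_pos_eq; [lra|]. apply Rdiv_le_0_compat; auto. apply lt_0_INR; lia.
- exists (S jr). intros j Hj.
  assert (HN : (0 < n j)%nat) by (pose proof (Hnj j); lia).
  destruct (per_j p q (n j) x Hq hx hxI HN (Hr j ltac:(lia))) as [P1 [P2 [P3 P4]]].
  split; [exact P1|]. split; [exact P2|].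
  eapply Rle_trans; [exact P3|].
  fold K. unfold Rdiv. apply Rmult_le_compat_l; auto.
  apply Rinv_le_contravar. apply lt_0_INR; lia. apply le_INR; auto.
- exact hlim.
- exists l. split; auto. exists m. split; auto. split.
  + rewrite Hlm. unfold AA. symmetry. apply is_series_unique.
    replace (INR m ^ 2 / INR q ^ 2) with ((INR m / INR q) ^ 2) by (field; lra).
    apply A_decomp. destruct (Hr01 m Hm). lra.
  + exists (j0 + S jr)%nat. intros j Hj.
    destruct (Hj0 j ltac:(lia)) as [E1 E2].
    split; [exact E1|].
    assert (HN : (0 < n j)%nat) by (pose proof (Hnj j); lia).
    destruct (per_j p q (n j) x Hq hx hxI HN (Hr j ltac:(lia))) as [_ [_ [_ P4]]].
    rewrite P4. unfold mm in E2. rewrite E2. reflexivity.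
Qed.
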